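(* Let $\Bbbk$ be a field of characteristic zero, let $V$ be a finite-dimensional $\Bbbk$-vector space, let $m\ge 2$, and for each $\ell=2,\dots,m$ let $\Psi_\ell:V^{\ell}\to V$ be a symmetric $\Bbbk$-multilinear map. Consider the polynomial map $F:V\to V$, $F(x)=x-\sum_{\ell=2}^m\Psi_\ell(x,\dots,x)$, and the algebra $A=(V,\{\Psi_\ell\}_{\ell=2}^m)$. Then $F$ is invertible (i.e. is a polynomial automorphism of $V$) if and only if $A$ is a Yagzhev algebra of some order $q_0$, i.e. if and only if there is $q_0$ such that for every $q\ge q_0$ and every $a\in A$ one has $\sum_{|t|=q}t(a)=0$.
   Context: Terms are formal expressions defined inductively: the symbol $x$ is a term with $|x|=1$; if $t_1,\dots,t_\ell$ are terms and $2\le \ell\le m$, then $\Psi_\ell(t_1,\dots,t_\ell)$ is a term with $|\Psi_\ell(t_1,\dots,t_\ell)|=|t_1|+\dots+|t_\ell|$. Different formal expressions are different terms even if they define the same element (e.g. $\Psi_2(x,\Psi_3(x,x,x))$ and $\Psi_2(\Psi_3(x,x,x),x)$ are distinct terms); $|t|$ is the number of occurrences of $x$ in $t$. For $a\in A$, $t(a)$ denotes the element obtained by substituting $a$ for $x$ and evaluating. The sum $\sum_{|t|=q}$ runs over all (finitely many) terms $t$ with $|t|=q$. The algebra $A$ is called a Yagzhev algebra of order $q_0$ if $\sum_{|t|=q}t(a)=0$ for all $a\in A$ and all $q\ge q_0$. *)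

(* Defs.v *)
From HB Require Import structures.
From mathcomp Require Import all_boot all_order all_algebra all_fingroup.
From mathcomp Require Import mpoly.
From Stdlib Require List.
Set Implicit Arguments. Unset Strict Implicit. Unset Printing Implicit Defensive.
Import GRing.Theory.
Local Open Scope ring_scope.

(* Formal terms in the single variable x and the operation symbols Psi_l. *)
Inductive term : Type :=
| TX : term
| TNode : nat -> seq term -> term.

Fixpoint term_wf (m : nat) (t : term) : bool :=
  match t with
  | TX => true
  | TNode l ts => [&& (2 <= l)%N, (l <= m)%N, size ts == l & all (term_wf m) ts]
  end.

Fixpoint term_size (t : term) : nat :=
  match t with
  | TX => 1%N
  | TNode _ ts => sumn (map term_size ts)
  end.

Fixpoint term_eval (K : fieldType) (n : nat)
    (Psi : forall l : nat, ('I_l -> 'rV[K]_n) -> 'rV[K]_n) (a : 'rV[K]_n)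
    (t : term) : 'rV[K]_n :=
  match t with
  | TX => a
  | TNode l ts =>
      Psi l (fun i : 'I_l => nth a (map (term_eval Psi a) ts) i)
  end.

Definition set_arg (T : Type) (l : nat) (f : 'I_l -> T) (i : 'I_l) (u : T) :
  'I_l -> T := fun j => if j == i then u else f j.

Definition multilinear (K : fieldType) (n l : nat)
    (P : ('I_l -> 'rV[K]_n) -> 'rV[K]_n) : Prop :=
  forall (f : 'I_l -> 'rV[K]_n) (i : 'I_l) (c : K) (u v : 'rV[K]_n),
    P (set_arg f i (c *: u + v)) = c *: P (set_arg f i u) + P (set_arg f i v).

Definition symmetric_map (K : fieldType) (n l : nat)
    (P : ('I_l -> 'rV[K]_n) -> 'rV[K]_n) : Prop :=
  forall (s : 'S_l) (f : 'I_l -> 'rV[K]_n), P (f \o s) = P f.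

Definition yag_map (K : fieldType) (n m : nat)
    (Psi : forall l : nat, ('I_l -> 'rV[K]_n) -> 'rV[K]_n) (x : 'rV[K]_n) :
  'rV[K]_n := x - \sum_(2 <= l < m.+1) Psi l (fun _ => x).

Definition is_polymap (K : fieldType) (n : nat) (G : 'rV[K]_n -> 'rV[K]_n) : Prop :=
  exists P : 'I_n -> {mpoly K[n]},
    forall (x : 'rV[K]_n) (j : 'I_n), G x ord0 j = (P j).@[fun i => x ord0 i].

Definition is_polyaut (K : fieldType) (n : nat) (F : 'rV[K]_n -> 'rV[K]_n) : Prop :=
  is_polymap F /\
  exists G : 'rV[K]_n -> 'rV[K]_n, is_polymap G /\ cancel F G /\ cancel G F.

Definition sum_terms_vanish (K : fieldType) (n m : nat)
    (Psi : forall l : nat, ('I_l -> 'rV[K]_n) -> 'rV[K]_n) (q : nat)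
    (a : 'rV[K]_n) : Prop :=
  exists s : seq term,
    List.NoDup s /\
    (forall t, List.In t s <-> (term_wf m t /\ term_size t = q)) /\
    \sum_(t <- s) term_eval Psi a t = 0.

Definition yagzhev_of_order (K : fieldType) (n m : nat)
    (Psi : forall l : nat, ('I_l -> 'rV[K]_n) -> 'rV[K]_n) (q0 : nat) : Prop :=
  forall q : nat, (q0 <= q)%N -> forall a : 'rV[K]_n, sum_terms_vanish m Psi q a.

(* Main.v *)
Require Import Defs.
From HB Require Import structures.
From mathcomp Require Import all_boot all_order all_algebra all_fingroup.
From mathcomp Require Import mpoly.
From Stdlib Require Import FunctionalExtensionality.
Set Implicit Arguments. Unset Strict Implicit. Unset Printing Implicit Defensive.
Import GRing.Theory.
Local Open Scope ring_scope.


Fixpoint term_ind' (P : term -> Prop) (HX : P TX)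
  (HN : forall l ts, List.Forall P ts -> P (TNode l ts)) (t : term) {struct t} : P t :=
  match t with
  | TX => HX
  | TNode l ts => HN l ts ((fix go (ts : seq term) : List.Forall P ts :=
       match ts with [::] => List.Forall_nil _ | t :: r => List.Forall_cons _ (term_ind' HX HN t) (go r) end) ts)
  end.

Fixpoint tenc (t : term) : GenTree.tree unit :=
  match t with TX => GenTree.Leaf tt | TNode l ts => GenTree.Node l (map tenc ts) end.
Fixpoint tdec (g : GenTree.tree unit) : term :=
  match g with GenTree.Leaf _ => TX | GenTree.Node l gs => TNode l (map tdec gs) end.
Lemma tencK : cancel tenc tdec.
Proof.
elim/term_ind' => //= l ts H; congr TNode; elim: ts H => //= t ts IH H.
by inversion H; subst; rewrite H2 IH.
Qed.
HB.instance Definition _ := Countable.copy term (can_type tencK).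

Lemma forall_inP (P : term -> Prop) ts : List.Forall P ts -> forall t, t \in ts -> P t.
Proof. elim=> // t r Pt _ IH u; rewrite inE => /orP[/eqP->//|]; exact: IH. Qed.


Lemma size_pos m t : term_wf m t -> (0 < term_size t)%N.
Proof.
elim/term_ind': t => //= l [|t ts] H /and4P[l2 _ /eqP sz]; first by subst l.
rewrite /= => /andP[wt _].
inversion H; subst => /=.
by apply: leq_trans (H2 wt) _; apply: leq_addr.
Qed.

Fixpoint tup (X : Type) (L : nat -> seq X) (k : nat) : seq (seq X) :=
  if k is k'.+1 then [seq rcons c x | c <- tup L k', x <- L k'] else [:: [::]].

Lemma mem_tup (X : eqType) (x0 : X) (L : nat -> seq X) k c :
  reflect (size c = k /\ forall i, (i < k)%N -> nth x0 c i \in L i) (c \in tup L k).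
Proof.
elim: k c => [|k IH] c /=.
  rewrite inE; apply: (iffP eqP) => [->|[/size0nil -> _]] //.
apply: (iffP allpairsP).
  case=> [[c' x] /= [/IH [sz Hc] Hx ->]]; rewrite size_rcons sz; split=> // i lt_ik.
  rewrite nth_rcons sz; case: (ltnP i k) => [lt|ge]; first exact: Hc.
  have -> : i = k by apply/eqP; rewrite eqn_leq ge -ltnS lt_ik.
  by rewrite eqxx.
case=> sz Hc; case/lastP: c sz Hc => [|c x]; first by [].
rewrite size_rcons => -[sz] Hc; exists (c, x) => /=; split => //.
- apply/IH; split=> // i lt; move: (Hc i (leqW lt)).
  by rewrite nth_rcons sz lt.
- by move: (Hc k (leqnn _)); rewrite nth_rcons sz ltnn eqxx.
Qed.

Lemma tup_uniq (X : eqType) (L : nat -> seq X) k :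
  (forall i, uniq (L i)) -> uniq (tup L k).
Proof.
move=> HL; elim: k => //= k IH; apply: allpairs_uniq => //.
by move=> [c x] [c' x'] _ _ /= /rcons_inj.
Qed.

Definition lrange m := index_iota 2 m.+1.

Definition comps l q := [seq c <- tup (fun _ => iota 1 q) l | sumn c == q].

Fixpoint enumF (m f q : nat) : seq term :=
  if f is f'.+1 then (if q == 1%N then [:: TX] else [::]) ++
    [seq TNode l ts | l <- lrange m,
       ts <- [seq ts | c <- comps l q, ts <- tup (fun i => enumF m f' (nth 0%N c i)) l]]
  else [::].

Lemma enumF_wf m f q t : t \in enumF m f q -> term_wf m t /\ term_size t = q.
Proof.
elim: f q t => //= f IH q t; rewrite mem_cat => /orP[|].
  by case: eqP => [->|_]; rewrite ?inE // => /eqP->.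
case/allpairsPdep=> l [ts [Hl /allpairsPdep [c [ts' [Hc /(mem_tup TX) [szt Ht] ->]]] ->]].
move: Hc; rewrite mem_filter => /andP[/eqP sc /(mem_tup 0%N) [szc Hc]].
move: Hl; rewrite mem_index_iota => /andP[l2 lm].
have Hi i : (i < l)%N -> term_wf m (nth TX ts' i) /\ term_size (nth TX ts' i) = nth 0%N c i.
  by move=> lt; apply: IH; apply: Ht.
split; last first.
  rewrite /= -sc; congr sumn; apply: (@eq_from_nth _ 0%N); first by rewrite size_map szt szc.
  by move=> i; rewrite size_map szt => lt; rewrite (nth_map TX) ?szt // (Hi i lt).2.
rewrite /= l2 -ltnS lm szt eqxx /=; apply/(all_nthP TX) => i; rewrite szt => lt.
exact: (Hi i lt).1.
Qed.

Lemma nth_le_sumn (s : seq nat) j : (nth 0 s j <= sumn s)%N.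
Proof.
elim: s j => [|x s IH] [|j] //=.
  exact: leq_addr.
by apply: leq_trans (IH j) _; apply: leq_addl.
Qed.

Lemma sumn_two (s : seq nat) i j : i != j ->
  (nth 0 s i + nth 0 s j <= sumn s)%N.
Proof.
wlog lt : i j / (i < j)%N.
  move=> H ne; case: (ltngtP i j) => [lt|gt|eq].
  - exact: H.
  - by rewrite addnC; apply: H => //; rewrite eq_sym.
  - by rewrite eq eqxx in ne.
elim: s i j lt => [|x s IH] [|i] [|j] //= lt _.
- by rewrite leq_add2l nth_le_sumn.
- apply: (leq_trans _ (leq_addl x _)); apply: IH => //; apply/negP => /eqP E; by rewrite E ltnn in lt.
Qed.

Lemma enumF_complete m f q t : (q <= f)%N -> term_wf m t -> term_size t = q ->
  t \in enumF m f q.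
Proof.
elim: f q t => [|f IH] q t hq wt st.
  rewrite leqn0 in hq; move/eqP: hq st => -> st.
  by have := size_pos wt; rewrite st.
rewrite /= mem_cat; case: t wt st => [|l ts] wt st.
  by apply/orP; left; rewrite -st /= mem_head.
apply/orP; right; move: wt => /= /and4P[l2 lm /eqP szl /allP wts].
have Hs i : (i < l)%N -> (0 < term_size (nth TX ts i))%N.
  by move=> lt; apply: (size_pos (m := m)); apply: wts; apply: mem_nth; rewrite szl.
have Hn i : (i < l)%N -> nth 0%N (map term_size ts) i = term_size (nth TX ts i).
  by move=> lt; rewrite (nth_map TX) ?szl.
apply/allpairsPdep; exists l, ts; split => //.
  by rewrite mem_index_iota l2 ltnS.
apply/allpairsPdep; exists (map term_size ts), ts; split => //.
  rewrite mem_filter; apply/andP; split; first by rewrite -st.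
  apply/(mem_tup 0%N); rewrite size_map szl; split=> // i lt.
  rewrite mem_iota Hn // (Hs i lt) /= add1n ltnS -st -(Hn i lt).
  exact: nth_le_sumn.
apply/(mem_tup TX); split => // i lt; rewrite Hn //.
apply: IH => //; last by apply: wts; apply: mem_nth; rewrite szl.
set j := if i == 0%N then 1%N else 0%N.
have ij : i != j by rewrite /j; case: (i =P 0%N) => [->|/eqP].
have jl : (j < l)%N by rewrite /j; case: (i == 0%N) => //; apply: leq_trans l2.
have := sumn_two (map term_size ts) ij; rewrite Hn // Hn // -/(term_size (TNode l ts)) st.
move=> h; rewrite -ltnS; apply: leq_trans hq; apply: leq_trans h.
by rewrite -addn1 leq_add2l (Hs j jl).
Qed.

Lemma comps_map_size m f l q c ts : c \in comps l q ->
  ts \in tup (fun i => enumF m f (nth 0%N c i)) l -> c = map term_size ts.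
Proof.
rewrite mem_filter => /andP[_ /(mem_tup 0%N) [szc _]] /(mem_tup TX) [szt Ht].
apply: (@eq_from_nth _ 0%N); first by rewrite size_map szt szc.
move=> i; rewrite szc => lt; rewrite (nth_map TX) ?szt //.
by rewrite (enumF_wf (Ht i lt)).2.
Qed.

Lemma existT_pair (A B : Type) (c c' : A) (t t' : B) :
  existT (fun _ => B) c t = existT (fun _ => B) c' t' -> c = c' /\ t = t'.
Proof. by move=> h; have := congr1 (fun p : {x : A & B} => (projT1 p, projT2 p) : A * B) h => -[]. Qed.

Lemma enumF_uniq m f q : uniq (enumF m f q).
Proof.
elim: f q => // f IH q /=; rewrite cat_uniq; apply/and3P; split.
- by case: (q == 1%N).
- apply/hasPn => t /allpairsPdep [l [ts [_ _ ->]]]; by case: (q == 1%N).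
apply: allpairs_uniq_dep.
- exact: iota_uniq.
- move=> l _; apply: allpairs_uniq_dep.
  + by apply: filter_uniq; apply: tup_uniq => i; apply: iota_uniq.
  + by move=> c _; apply: tup_uniq => i; apply: IH.
  + move=> [c1 ts1] [c2 ts2] /allpairsPdep [c1' [ts1' [H1 H1' E1]]]
      /allpairsPdep [c2' [ts2' [H2 H2' E2]]] /= E.
    have [e1 e1'] := existT_pair E1; have [e2 e2'] := existT_pair E2.
    subst c1' ts1' c2' ts2'; move: E H1' H2' => /= <- H1' H2'.
    by rewrite (comps_map_size H1 H1') (comps_map_size H2 H2').
- move=> [l1 ts1] [l2 ts2] _ _ /= [E1 E2]; by subst.
Qed.


Section ML.
Variables (K : fieldType) (n l : nat) (P : ('I_l -> 'rV[K]_n) -> 'rV[K]_n).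
Hypothesis hP : multilinear P.

Lemma ml_zero f i : P (set_arg f i 0) = 0.
Proof.
have := hP f i (-1) 0 0; rewrite scaler0 addr0 scaleN1r addNr => ->; done.
Qed.

Lemma ml_sum f i (X : Type) (r : seq X) (a : X -> K) (g : X -> 'rV[K]_n) :
  P (set_arg f i (\sum_(x <- r) a x *: g x)) = \sum_(x <- r) a x *: P (set_arg f i (g x)).
Proof.
elim: r => [|x r IH]; first by rewrite !big_nil ml_zero.
by rewrite !big_cons hP IH.
Qed.

Lemma ml_expand_k (X : eqType) (x0 : X) (L : nat -> seq X) (a : nat -> X -> K)
  (g : nat -> X -> 'rV[K]_n) k : (k <= l)%N -> forall (h : 'I_l -> 'rV[K]_n),
  P (fun i : 'I_l => if (i < k)%N then \sum_(x <- L i) a i x *: g i x else h i) =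
  \sum_(c <- tup L k) (\prod_(0 <= i < k) a i (nth x0 c i)) *:
     P (fun i : 'I_l => if (i < k)%N then g i (nth x0 c i) else h i).
Proof.
elim: k => [|k IH] kl h.
  by rewrite /= big_seq1 big_geq // scale1r.
have kl' : (k < l)%N by [].
set ko := Ordinal kl'.
set F := fun i : 'I_l => if (i < k)%N then \sum_(x <- L i) a i x *: g i x else h i.
have -> : (fun i : 'I_l => if (i < k.+1)%N then \sum_(x <- L i) a i x *: g i x else h i)
   = set_arg F ko (\sum_(x <- L k) a k x *: g k x).
  apply: functional_extensionality => i; rewrite /set_arg /F.
  case: (ltngtP i k) => [lt|gt|eq].
  - by rewrite ltnS ltnW // ifF //; apply/eqP => /(congr1 val) /= E; rewrite E ltnn in lt.
  - rewrite ltnNge gt /= ifF //; apply/eqP => /(congr1 val) /= E; by rewrite E ltnn in gt.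
  - rewrite (_ : (i < k.+1)%N = true); last by rewrite eq ltnSn.
    rewrite (_ : (i == ko) = true); last by apply/eqP/val_inj.
    by rewrite eq.
rewrite ml_sum.
have E x : set_arg F ko (g k x) = (fun i : 'I_l => if (i < k)%N then
      \sum_(y <- L i) a i y *: g i y else set_arg h ko (g k x) i).
  apply: functional_extensionality => i; rewrite /set_arg /F.
  case: (ltnP i k) => [lt|//]; rewrite ifF //.
  by apply/eqP => /(congr1 val) /= E; rewrite E ltnn in lt.
under eq_bigr => x _ do rewrite E (IH (ltnW kl)) scaler_sumr.
rewrite /= big_allpairs_dep exchange_big /= big_seq [RHS]big_seq.
apply: eq_bigr => c /(mem_tup x0) [szc _]; apply: eq_bigr => x _.
rewrite scalerA; congr (_ *: P _).
  rewrite big_nat_recr //= nth_rcons szc ltnn eqxx mulrC; congr (_ * _).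
  by apply: eq_big_nat => i /andP[_ lt]; rewrite nth_rcons szc lt.
apply: functional_extensionality => i; rewrite /set_arg nth_rcons szc.
case: (ltngtP i k) => [lt|gt|eq].
- by rewrite ltnS (ltnW lt).
- rewrite ltnNge gt /= ifF //; apply/eqP => /(congr1 val) /= E'.
  by rewrite E' ltnn in gt.
- rewrite (_ : (i < k.+1)%N = true); last by rewrite eq ltnSn.
  rewrite (_ : (i == ko) = true); last by apply/eqP/val_inj.
  by rewrite eq.
Qed.

Lemma ml_expand (X : eqType) (x0 : X) (L : nat -> seq X) (a : nat -> X -> K)
  (g : nat -> X -> 'rV[K]_n) :
  P (fun i : 'I_l => \sum_(x <- L i) a i x *: g i x) =
  \sum_(c <- tup L l) (\prod_(0 <= i < l) a i (nth x0 c i)) *: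
     P (fun i : 'I_l => g i (nth x0 c i)).
Proof.
transitivity (P (fun i : 'I_l => if (i < l)%N then \sum_(x <- L i) a i x *: g i x else 0)).
  by congr P; apply: functional_extensionality => i; rewrite ltn_ord.
rewrite (ml_expand_k x0) //; apply: eq_bigr => c _; congr (_ *: P _).
by apply: functional_extensionality => i; rewrite ltn_ord.
Qed.

End ML.


Lemma sum_pred1_seq (I : eqType) (V : zmodType) (r : seq I) k (F : I -> V) :
  uniq r -> \sum_(q <- r | q == k) F q = if k \in r then F k else 0.
Proof.
elim: r => [|x r IH] /=; first by rewrite big_nil.
case/andP=> xr ur; rewrite big_cons inE IH //.
case: (x =P k) => [<-|Hne] /=.
  by rewrite (negbTE xr) eqxx /= addr0.
by rewrite (_ : (k == x) = false) //; apply/eqP => e; apply: Hne; rewrite e.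
Qed.


Lemma InP (T : eqType) (x : T) s : List.In x s <-> x \in s.
Proof.
elim: s => //= y s IH; rewrite inE; split.
  by case=> [->|/IH ->]; rewrite ?eqxx ?orbT.
by case/orP=> [/eqP->|/IH]; [left|right].
Qed.

Lemma NoDup_uniq (T : eqType) (s : seq T) : List.NoDup s -> uniq s.
Proof.
elim=> //= x r nx _ ->; rewrite andbT; apply/negP => /InP; exact: nx.
Qed.

Lemma prod_expr_sumn (R : comNzRingType) (x : R) c :
  \prod_(0 <= i < size c) x ^+ nth 0%N c i = x ^+ sumn c.
Proof.
elim: c => [|y c IH] /=; first by rewrite big_nil.
by rewrite big_nat_recl //= IH exprD.
Qed.

Lemma sumn_bound (c : seq nat) b : (forall i, (i < size c)%N -> (nth 0%N c i < b)%N) ->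
  (sumn c <= size c * b)%N.
Proof.
elim: c => //= x c IH H; rewrite mulSn leq_add //.
  by apply: ltnW; apply: (H 0%N).
by apply: IH => i lt; apply: (H i.+1).
Qed.

Section SDef.
Variables (K : fieldType) (n m : nat).
Variable Psi : forall l : nat, ('I_l -> 'rV[K]_n) -> 'rV[K]_n.
Arguments Psi : clear implicits.
Hypothesis hlin : forall l : nat, (2 <= l)%N -> (l <= m)%N -> multilinear (Psi l).

Definition Ssum (a : 'rV[K]_n) q := \sum_(t <- enumF m q q) term_eval Psi a t.

Lemma S_enum f q a : (q <= f)%N ->
  \sum_(t <- enumF m f q) term_eval Psi a t = Ssum a q.
Proof.
move=> qf; apply: perm_big; apply: uniq_perm; rewrite ?enumF_uniq // => t.
apply/idP/idP => /enumF_wf [w s]; apply: enumF_complete => //.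
Qed.

Lemma S_any a q s : List.NoDup s ->
  (forall t, List.In t s <-> (term_wf m t /\ term_size t = q)) ->
  \sum_(t <- s) term_eval Psi a t = Ssum a q.
Proof.
move=> nd H; apply: perm_big; apply: uniq_perm; rewrite ?enumF_uniq ?NoDup_uniq //.
move=> t; apply/idP/idP => [/InP /H [w s']|/enumF_wf /H /InP //].
exact: enumF_complete.
Qed.

Lemma lrangeP l : l \in lrange m -> (2 <= l)%N /\ (l <= m)%N.
Proof. by rewrite mem_index_iota => /andP[-> lt]. Qed.

Lemma S_rec a q : Ssum a q = (if q == 1%N then a else 0) +
  \sum_(l <- lrange m) \sum_(c <- comps l q) Psi l (fun i : 'I_l => Ssum a (nth 0%N c i)).
Proof.
rewrite -(S_enum a (leqnSn q)) /= big_cat /=; congr (_ + _).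
  by case: (q == 1%N); rewrite ?big_seq1 ?big_nil.
rewrite big_allpairs_dep big_seq [RHS]big_seq; apply: eq_bigr => l /lrangeP [l2 lm].
rewrite big_allpairs_dep big_seq [RHS]big_seq; apply: eq_bigr => c hc.
have hc' := hc; move: hc'; rewrite mem_filter => /andP[_ /(mem_tup 0%N) [szc Hc]].
transitivity (Psi l (fun i : 'I_l => \sum_(t <- enumF m q (nth 0%N c i)) 1 *: term_eval Psi a t)).
  rewrite [RHS](ml_expand (hlin l2 lm) TX (fun i => enumF m q (nth 0%N c i)) (fun _ _ => 1) (fun _ t => term_eval Psi a t)) big_seq [RHS]big_seq; apply: eq_bigr => ts /(mem_tup TX) [szt _].
  rewrite big1_eq scale1r /=; f_equal.
  by apply: functional_extensionality => i; rewrite (nth_map TX) // szt.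
f_equal; apply: functional_extensionality => i.
rewrite -(S_enum a (f := q)); first by apply: eq_bigr => t _; rewrite scale1r.
by move: (Hc i (ltn_ord i)); rewrite mem_iota add1n ltnS => /andP[].
Qed.

Lemma S0 a : Ssum a 0 = 0.
Proof. by rewrite /Ssum big_nil. Qed.


Lemma comps_filter l q N : (q <= N)%N ->
  perm_eq (comps l q) [seq c <- tup (fun _ => iota 1 N) l | sumn c == q].
Proof.
move=> qN; apply: uniq_perm.
- by rewrite filter_uniq // tup_uniq // => i; exact: iota_uniq.
- by rewrite filter_uniq // tup_uniq // => i; exact: iota_uniq.
move=> c; rewrite !mem_filter.
apply/andP/andP; case=> /eqP sc /(mem_tup 0%N) [szc Hc]; split; rewrite ?sc //;
  apply/(mem_tup 0%N); split=> // i lt; move: (Hc i lt);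
  rewrite !mem_iota !add1n !ltnS => /andP[h1 h2]; rewrite h1 /=.
- exact: leq_trans h2 qN.
- by rewrite -sc nth_le_sumn.
Qed.

Definition Tl (y : 'rV[K]_n) N (x : K) := \sum_(q <- iota 1 N) x ^+ q *: Ssum y q.
Definition Rest (y : 'rV[K]_n) N (x : K) := \sum_(l <- lrange m)
  \sum_(c <- tup (fun _ => iota 1 N) l | (N < sumn c)%N)
     x ^+ sumn c *: Psi l (fun i : 'I_l => Ssum y (nth 0%N c i)).

Lemma Psi_Tl y N x l : l \in lrange m ->
  Psi l (fun _ => Tl y N x) = \sum_(c <- tup (fun _ => iota 1 N) l)
     x ^+ sumn c *: Psi l (fun i : 'I_l => Ssum y (nth 0%N c i)).
Proof.
move=> /lrangeP [l2 lm].
rewrite (ml_expand (hlin l2 lm) 0%N (fun _ => iota 1 N) (fun _ q => x ^+ q) (fun _ q => Ssum y q)).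
rewrite big_seq [RHS]big_seq; apply: eq_bigr => c /(mem_tup 0%N) [szc _].
by rewrite -{1}szc prod_expr_sumn.
Qed.

Lemma small_part y N x l : l \in lrange m ->
  \sum_(c <- tup (fun _ => iota 1 N) l | ~~ (N < sumn c)%N)
     x ^+ sumn c *: Psi l (fun i : 'I_l => Ssum y (nth 0%N c i)) =
  \sum_(q <- iota 1 N) x ^+ q *: \sum_(c <- comps l q) Psi l (fun i : 'I_l => Ssum y (nth 0%N c i)).
Proof.
move=> /lrangeP [l2 lm].
transitivity (\sum_(q <- iota 1 N) \sum_(c <- tup (fun _ => iota 1 N) l | sumn c == q)
   x ^+ q *: Psi l (fun i : 'I_l => Ssum y (nth 0%N c i))); last first.
  rewrite big_seq [RHS]big_seq; apply: eq_bigr => q; rewrite mem_iota add1n ltnS => /andP[_ qN].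
  by rewrite scaler_sumr (perm_big _ (comps_filter l qN)) big_filter.
under [RHS]eq_bigr => q _ do rewrite big_mkcond.
rewrite [RHS]exchange_big /= big_mkcond big_seq [RHS]big_seq; apply: eq_bigr => c /(mem_tup 0%N) [szc Hc].
rewrite -big_mkcond (eq_bigl (fun q => q == sumn c)); last by move=> q; rewrite eq_sym.
rewrite sum_pred1_seq ?iota_uniq // mem_iota add1n ltnS -leqNgt.
have -> : (0 < sumn c)%N.
  have := Hc 0%N (leq_trans _ l2); rewrite mem_iota => /(_ erefl) /andP[h _].
  by apply: leq_trans h (nth_le_sumn _ _).
by [].
Qed.

Lemma PW y N x : (1 <= N)%N -> yag_map m Psi (Tl y N x) = x *: y - Rest y N x.
Proof.
move=> N1; rewrite /yag_map.
have E : \sum_(2 <= l < m.+1) Psi l (fun _ => Tl y N x) =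
   \sum_(l <- lrange m) \sum_(q <- iota 1 N) x ^+ q *:
      \sum_(c <- comps l q) Psi l (fun i : 'I_l => Ssum y (nth 0%N c i)) + Rest y N x.
  rewrite /Rest -big_split /= big_seq [RHS]big_seq; apply: eq_bigr => l hl.
  rewrite Psi_Tl // (bigID (fun c => (N < sumn c)%N)) /= addrC small_part //.
rewrite E {E} /Tl.
have -> : \sum_(q <- iota 1 N) x ^+ q *: Ssum y q = x *: y +
  \sum_(l <- lrange m) \sum_(q <- iota 1 N) x ^+ q *:
      \sum_(c <- comps l q) Psi l (fun i : 'I_l => Ssum y (nth 0%N c i)).
  rewrite exchange_big /=.
  transitivity (\sum_(q <- iota 1 N) ((if q == 1%N then x *: y else 0) + x ^+ q *:
      \sum_(l <- lrange m) \sum_(c <- comps l q) Psi l (fun i : 'I_l => Ssum y (nth 0%N c i)))).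
    apply: eq_bigr => q _; rewrite S_rec scalerDr; congr (_ + _).
    by case: (q =P 1%N) => [->|]; rewrite ?expr1 ?scaler0.
  rewrite big_split /=; congr (_ + _); last by apply: eq_bigr => q _; rewrite scaler_sumr.
  case: N N1 => // N' _; rewrite /= big_cons /= big1_seq ?addr0 // => q /= hq.
  by move: hq; rewrite mem_iota => /andP[h _]; case: (q =P 1%N) h => // ->.
by rewrite opprD addrA addrK.
Qed.

End SDef.


Section PM.
Variables (K : fieldType) (n : nat).
Local Notation V := 'rV[K]_n.

Lemma pm_ext (G G' : V -> V) : G =1 G' -> is_polymap G -> is_polymap G'.
Proof. by move=> e [P HP]; exists P => x j; rewrite -e. Qed.

Lemma pm_id : is_polymap (fun x : V => x).
Proof. by exists (fun j => 'X_j) => x j; rewrite mevalXU. Qed.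

Lemma pm_const (c : V) : is_polymap (fun _ : V => c).
Proof. by exists (fun j => (c 0 j)%:MP) => x j; rewrite mevalC. Qed.

Lemma pm_add (G1 G2 : V -> V) : is_polymap G1 -> is_polymap G2 ->
  is_polymap (fun x => G1 x + G2 x).
Proof.
move=> [P1 H1] [P2 H2]; exists (fun j => P1 j + P2 j) => x j.
by rewrite mevalD -H1 -H2 mxE.
Qed.

Lemma pm_scale (k : K) (G : V -> V) : is_polymap G -> is_polymap (fun x => k *: G x).
Proof. by move=> [P H]; exists (fun j => k *: P j) => x j; rewrite mevalZ -H mxE. Qed.

Lemma pm_opp (G : V -> V) : is_polymap G -> is_polymap (fun x => - G x).
Proof. by move=> h; apply: pm_ext (pm_scale (-1) h) => x; rewrite scaleN1r. Qed.

Lemma pm_sum (I : Type) (r : seq I) (G : I -> V -> V) :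
  (forall i, List.In i r -> is_polymap (G i)) -> is_polymap (fun x => \sum_(i <- r) G i x).
Proof.
elim: r => [|i r IH] H.
  by apply: pm_ext (pm_const 0) => x; rewrite big_nil.
apply: pm_ext (pm_add (H i (or_introl erefl)) (IH (fun j h => H j (or_intror h)))).
by move=> x; rewrite big_cons.
Qed.

Lemma fin_choice (l : nat) (phi : nat -> V -> V) :
  (forall i, (i < l)%N -> is_polymap (phi i)) ->
  exists Q : nat -> 'I_n -> {mpoly K[n]}, forall i, (i < l)%N ->
     forall x j, phi i x 0 j = (Q i j).@[fun k => x 0 k].
Proof.
elim: l => [|l IH] H; first by exists (fun _ _ => 0).
have [Q HQ] := IH (fun i lt => H i (leqW lt)).
have [P HP] := H l (leqnn _).
exists (fun i => if i == l then P else Q i) => i; rewrite ltnS leq_eqVlt.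
case: (i =P l) => [->|_] /= lt; first exact: HP.
exact: HQ.
Qed.

Lemma pm_ml l (P : ('I_l -> V) -> V) (hP : multilinear P) (phi : nat -> V -> V) :
  (forall i, (i < l)%N -> is_polymap (phi i)) ->
  is_polymap (fun x => P (fun i : 'I_l => phi i x)).
Proof.
move=> H; case: (posnP n) => [n0|n_gt0].
  by exists (fun _ => 0) => x j; have := ltn_ord j; rewrite {2}n0.
set x0 := Ordinal n_gt0.
have [Q HQ] := fin_choice H.
exists (fun j => \sum_(c <- tup (fun _ => index_enum 'I_n) l)
  (\prod_(0 <= i < l) Q i (nth x0 c i)) * (P (fun i : 'I_l => delta_mx 0 (nth x0 c i)) 0 j)%:MP).
move=> x j.
have -> : (fun i : 'I_l => phi i x) =
   (fun i : 'I_l => \sum_(k <- index_enum 'I_n) phi i x 0 k *: delta_mx 0 k).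
  by apply: functional_extensionality => i; rewrite {1}(row_sum_delta (phi i x)).
rewrite (ml_expand hP x0 (fun _ => index_enum 'I_n) (fun i k => phi i x 0 k)
   (fun _ k => delta_mx 0 k)).
rewrite summxE rmorph_sum /=; apply: eq_bigr => c _.
rewrite mxE mevalM mevalC rmorph_prod /=; congr (_ * _).
apply: eq_big_nat => i /andP[_ lt]; exact: HQ.
Qed.

End PM.

Section PMT.
Variables (K : fieldType) (n m : nat).
Local Notation V := 'rV[K]_n.
Variable Psi : forall l : nat, ('I_l -> 'rV[K]_n) -> 'rV[K]_n.
Arguments Psi : clear implicits.
Hypothesis hlin : forall l : nat, (2 <= l)%N -> (l <= m)%N -> multilinear (Psi l).

Lemma pm_term (phi : V -> V) t : is_polymap phi -> term_wf m t ->
  is_polymap (fun x => term_eval Psi (phi x) t).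
Proof.
move=> hphi; elim/term_ind': t => [_|l ts IH] /=; first exact: hphi.
move=> /and4P[l2 lm /eqP szl /allP wts].
have H i : (i < l)%N -> is_polymap (fun x => term_eval Psi (phi x) (nth TX ts i)).
  move=> lt; have mi : nth TX ts i \in ts by apply: mem_nth; rewrite szl.
  exact: (forall_inP IH mi (wts _ mi)).
apply: (pm_ext _ (pm_ml (hlin l2 lm) H)) => x /=; f_equal.
by apply: functional_extensionality => i; rewrite (nth_map TX) // szl.
Qed.

Lemma pm_S (phi : V -> V) q : is_polymap phi -> is_polymap (fun x => Ssum m Psi (phi x) q).
Proof.
move=> hphi; apply: pm_sum => t /InP /enumF_wf [w _]; exact: pm_term.
Qed.

Lemma pm_Tl (phi : V -> V) N c : is_polymap phi -> is_polymap (fun x => Tl m Psi (phi x) N c).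
Proof.
move=> hphi; apply: pm_sum => q _; apply: pm_scale; exact: pm_S.
Qed.

Lemma pm_yag : is_polymap (yag_map m Psi).
Proof.
apply: (@pm_ext _ _ (fun x => x + - \sum_(l <- lrange m) Psi l (fun _ => x))).
  by move=> x; rewrite /yag_map.
apply: pm_add; first exact: pm_id.
apply: pm_opp; apply: pm_sum => l /InP /(lrangeP) [l2 lm].
apply: (pm_ml (hlin l2 lm) (phi := fun _ x => x)) => i _; exact: pm_id.
Qed.

End PMT.


Section Poly.
Variable K : fieldType.
Hypothesis hK : [pchar K] =i pred0.

Lemma poly_ext (p q : {poly K}) : (forall x, p.[x] = q.[x]) -> p = q.
Proof.
move=> H; apply/eqP; rewrite -subr_eq0; apply/negPn/negP => nz.
set r := p - q.
have Hall : all (root r) [seq i%:R | i <- iota 0 (size r)].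
  by apply/allP => x /mapP [i _ ->]; rewrite /root /r hornerD hornerN H subrr.
have Hu : uniq [seq i%:R : K | i <- iota 0 (size r)].
  rewrite map_inj_in_uniq ?iota_uniq // => i j _ _ /eqP.
  rewrite -subr_eq0 => e; move: (e).
  have [le|lt] := leqP j i.
    rewrite -natrB // ((pcharf0P K).1 hK) subn_eq0 => h; apply/eqP.
    by rewrite eqn_leq h le.
  rewrite -opprB -natrB ?(ltnW lt) // oppr_eq0 ((pcharf0P K).1 hK) subn_eq0 => h.
  by move: lt; rewrite ltnNge h.
by have := max_poly_roots nz Hall Hu; rewrite size_map size_iota ltnn.
Qed.

Definition cg k (a b : {poly K}) := 'X^k %| a - b.

Lemma cg_refl k a : cg k a a.
Proof. by rewrite /cg subrr dvdp0. Qed.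

Lemma cg_add k a a' b b' : cg k a a' -> cg k b b' -> cg k (a + b) (a' + b').
Proof.
by move=> h1 h2; rewrite /cg opprD addrACA; apply: dvdp_add.
Qed.

Lemma cg_opp k a a' : cg k a a' -> cg k (- a) (- a').
Proof. by rewrite /cg -opprD dvdpNr. Qed.

Lemma cg_mul k a a' b b' : cg k a a' -> cg k b b' -> cg k (a * b) (a' * b').
Proof.
move=> h1 h2; rewrite /cg (_ : a * b - a' * b' = a * (b - b') + (a - a') * b').
  by apply: dvdp_add; [apply: dvdp_mull | apply: dvdp_mulr].
by rewrite mulrBr mulrBl addrA subrK.
Qed.

Lemma cg_sum k (I : Type) (r : seq I) (F G : I -> {poly K}) :
  (forall i, cg k (F i) (G i)) -> cg k (\sum_(i <- r) F i) (\sum_(i <- r) G i).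
Proof.
move=> H; elim: r => [|i r IH]; first by rewrite !big_nil cg_refl.
by rewrite !big_cons; apply: cg_add.
Qed.

Lemma cg_prod k (I : Type) (r : seq I) (F G : I -> {poly K}) :
  (forall i, cg k (F i) (G i)) -> cg k (\prod_(i <- r) F i) (\prod_(i <- r) G i).
Proof.
move=> H; elim: r => [|i r IH]; first by rewrite !big_nil cg_refl.
by rewrite !big_cons; apply: cg_mul.
Qed.

Lemma cg_exp k a b e : cg k a b -> cg k (a ^+ e) (b ^+ e).
Proof.
move=> h; elim: e => [|e IH]; first by rewrite !expr0 cg_refl.
by rewrite !exprS; apply: cg_mul.
Qed.

Lemma dvdXn_coef k (p : {poly K}) i : 'X^k %| p -> (i < k)%N -> p`_i = 0.
Proof.
by case/dvdpP => q -> lt; rewrite coefMXn lt.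
Qed.

Lemma cg_coef k (a b : {poly K}) i : cg k a b -> (i < k)%N -> a`_i = b`_i.
Proof.
by move=> h lt; apply/eqP; rewrite -subr_eq0 -coefB; apply/eqP; apply: dvdXn_coef h lt.
Qed.

Lemma dvdXn_eq0 (p : {poly K}) : (forall k, 'X^k %| p) -> p = 0.
Proof.
move=> H; apply/eqP/negPn/negP => nz.
by have := dvdp_leq nz (H (size p)); rewrite size_polyXn ltnn.
Qed.

Variable n : nat.

Definition evp (P : {mpoly K[n]}) (u : 'I_n -> {poly K}) : {poly K} :=
  \sum_(m <- msupp P) (P@_m)%:P * \prod_(i < n) u i ^+ m i.

Lemma evp_eval P u x : (evp P u).[x] = P.@[fun i => (u i).[x]].
Proof.
rewrite /evp mevalE horner_sum; apply: eq_bigr => m _.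
rewrite hornerM hornerC horner_prod; congr (_ * _); apply: eq_bigr => i _.
by rewrite horner_exp.
Qed.

Lemma evp_cg k P u v : (forall i, cg k (u i) (v i)) -> cg k (evp P u) (evp P v).
Proof.
move=> H; apply: cg_sum => m; apply: cg_mul; first exact: cg_refl.
apply: cg_prod => i; exact: cg_exp.
Qed.

Lemma evp_lin_coef P (y : 'I_n -> K) q : (msize P <= q)%N ->
  (evp P (fun i => y i *: 'X))`_q = 0.
Proof.
move=> hq; rewrite /evp coef_sum big1_seq // => m /= hm.
rewrite (eq_bigr (fun i => y i ^+ m i *: 'X ^+ m i)); last by move=> i _; rewrite exprZn.
rewrite scaler_prod prodrXr coefCM coefZ coefXn.
have lt := msize_mdeg_lt hm; rewrite mdegE in lt.
by rewrite (_ : (q == _) = false) ?mulr0 //; apply/negbTE; rewrite neq_ltn (leq_trans lt hq) orbT.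
Qed.

End Poly.


Lemma dvdp_sumP (K : fieldType) (I : Type) (r : seq I) (Pr : pred I) (F : I -> {poly K}) d :
  (forall i, Pr i -> d %| F i) -> d %| \sum_(i <- r | Pr i) F i.
Proof. move=> H; apply: (big_ind (fun p => d %| p)); [exact: dvdp0 | exact: dvdp_add | exact: H]. Qed.

Section Fwd.
Variables (K : fieldType) (n m : nat).
Hypothesis hK : [pchar K] =i pred0.
Local Notation V := 'rV[K]_n.
Variable Psi : forall l : nat, ('I_l -> 'rV[K]_n) -> 'rV[K]_n.
Arguments Psi : clear implicits.
Hypothesis hlin : forall l : nat, (2 <= l)%N -> (l <= m)%N -> multilinear (Psi l).

Lemma fwd_core (P : 'I_n -> {mpoly K[n]}) (G : V -> V)
  (hG : forall x j, G x 0 j = (P j).@[fun i => x 0 i])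
  (hGF : cancel (yag_map m Psi) G) y q :
  (1 <= q)%N -> (forall j, msize (P j) <= q)%N -> Ssum m Psi y q = 0.
Proof.
move=> q1 hP; apply/rowP => j; rewrite mxE.
set tau := \sum_(q' <- iota 1 q) (Ssum m Psi y q' 0 j) *: 'X^q'.
set rho := fun i => \sum_(l <- lrange m) \sum_(c <- tup (fun _ => iota 1 q) l | (q < sumn c)%N)
  (Psi l (fun i0 => Ssum m Psi y (nth 0%N c i0)) 0 i) *: 'X^(sumn c).
set u := fun i => y 0 i *: 'X - rho i.
have Hrho x i : (rho i).[x] = Rest m Psi y q x 0 i.
  rewrite /rho /Rest horner_sum summxE; apply: eq_bigr => l _.
  rewrite horner_sum summxE; apply: eq_bigr => c _.
  by rewrite hornerZ hornerXn !mxE mulrC.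
have Htau x : tau.[x] = Tl m Psi y q x 0 j.
  rewrite /tau /Tl horner_sum summxE; apply: eq_bigr => q' _.
  by rewrite hornerZ hornerXn !mxE mulrC.
have E1 : evp (P j) u = tau.
  apply: (poly_ext hK) => x; rewrite evp_eval Htau.
  transitivity ((P j).@[fun i => (yag_map m Psi (Tl m Psi y q x)) 0 i]).
    apply: meval_eq => i; rewrite (PW hlin) // /u hornerD hornerN hornerZ hornerX Hrho.
    by rewrite !mxE mulrC.
  by rewrite -hG hGF.
have E2 : cg q.+1 (evp (P j) u) (evp (P j) (fun i => y 0 i *: 'X)).
  apply: evp_cg => i; rewrite /cg /u addrAC subrr add0r dvdpNr /rho.
  apply: dvdp_sumP => l _; apply: dvdp_sumP => c hc.
  by rewrite -mul_polyC; apply: dvdp_mull; apply: dvdp_exp2l.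
have := cg_coef E2 (ltnSn q); rewrite E1 evp_lin_coef // /tau coef_sum.
rewrite (bigD1_seq q) ?iota_uniq ?mem_iota ?q1 ?add1n ?ltnSn //=.
rewrite coefZ coefXn eqxx mulr1 big1 ?addr0 // => q' hq'.
by rewrite coefZ coefXn eq_sym (negbTE hq') mulr0.
Qed.

End Fwd.


Lemma dvdp_prodX (K : fieldType) (a : nat -> {poly K}) l :
  (forall i, 'X %| a i) -> 'X^l %| \prod_(0 <= i < l) a i.
Proof.
move=> H; elim: l => [|l IH]; first by rewrite big_nil expr0 dvd1p.
by rewrite big_nat_recr //= exprS mulrC; apply: dvdp_mul.
Qed.

Lemma prod_diff (K : fieldType) (a b : nat -> {poly K}) k l : (1 <= k)%N ->
  (forall i, 'X %| b i) -> (forall i, 'X^k %| a i - b i) ->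
  'X^(k + l) %| \prod_(0 <= i < l.+1) a i - \prod_(0 <= i < l.+1) b i.
Proof.
move=> k1 Hb Hab.
have Ha i : 'X %| a i.
  rewrite -(subrK (b i) (a i)); apply: dvdp_add (Hb i).
  by apply: dvdp_trans (Hab i); rewrite -{1}(expr1 'X); apply: dvdp_exp2l.
elim: l => [|l IH]; first by rewrite !big_nat1 addn0.
rewrite big_nat_recr // [X in _ - X]big_nat_recr //=.
set A := \prod_(0 <= i < l.+1) a i; set B := \prod_(0 <= i < l.+1) b i.
rewrite (_ : A * a l.+1 - B * b l.+1 = A * (a l.+1 - b l.+1) + (A - B) * b l.+1); last first.
  by rewrite mulrBr mulrBl addrA subrK.
apply: dvdp_add.
  rewrite (_ : (k + l.+1 = l.+1 + k)%N) ?exprD; last by rewrite addnC.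
  by apply: dvdp_mul; [exact: dvdp_prodX | exact: Hab].
by rewrite addnS exprS mulrC; apply: dvdp_mul.
Qed.

Lemma zmod_solve (W : zmodType) (a e A B : W) : a + e - A = a - B -> e = A - B.
Proof.
move=> h; have : a + e = a + (A - B).
  by rewrite -(subrK A (a + e)) h addrAC addrA.
by move/addrI.
Qed.

Section Bwd.
Variables (K : fieldType) (n m : nat).
Hypothesis hK : [pchar K] =i pred0.
Local Notation V := 'rV[K]_n.
Variable Psi : forall l : nat, ('I_l -> 'rV[K]_n) -> 'rV[K]_n.
Arguments Psi : clear implicits.
Hypothesis hlin : forall l : nat, (2 <= l)%N -> (l <= m)%N -> multilinear (Psi l).

Lemma ml_zero_at l (P : ('I_l -> V) -> V) (hP : multilinear P) (f : 'I_l -> V) i :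
  f i = 0 -> P f = 0.
Proof.
move=> fi; rewrite -(ml_zero hP f i); f_equal; apply: functional_extensionality => j.
by rewrite /set_arg; case: (j =P i) => // ->.
Qed.

Lemma term_eval0 t : term_wf m t -> term_eval Psi 0 t = 0.
Proof.
elim/term_ind': t => //= l ts IH /and4P[l2 lm /eqP szl /allP wts].
have l0 : (0 < l)%N by apply: leq_trans l2.
apply: (ml_zero_at (hlin l2 lm) (i := Ordinal l0)) => /=.
have mi : nth TX ts 0 \in ts by apply: mem_nth; rewrite szl.
by rewrite (nth_map TX) ?szl // (forall_inP IH mi (wts _ mi)).
Qed.

Lemma S_zero q : Ssum m Psi 0 q = 0.
Proof.
rewrite /Ssum big_seq big1 // => t /enumF_wf [w _]; exact: term_eval0.
Qed.

Lemma yag0 : yag_map m Psi 0 = 0.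
Proof.
rewrite /yag_map big_seq big1 ?subr0 // => l /lrangeP [l2 lm].
have l0 : (0 < l)%N by apply: leq_trans l2.
exact: (ml_zero_at (hlin l2 lm) (i := Ordinal l0)).
Qed.

Variable q0 : nat.
Hypothesis hS : forall a k, (q0 <= k)%N -> Ssum m Psi a k = 0.
Let N := (m * q0).+1.
Definition Tinv (y : V) := Tl m Psi y N 1.

Lemma bwd_FT y : yag_map m Psi (Tinv y) = y.
Proof.
rewrite /Tinv (PW hlin) // scale1r (_ : Rest m Psi y N 1 = 0) ?subr0 //.
rewrite /Rest big_seq big1 // => l /lrangeP [l2 lm].
rewrite big_seq_cond big1 // => c /andP [/(mem_tup 0%N) [szc _] hN].
case: (boolP (all (fun i => nth 0%N c i < q0)%N (iota 0 l))) => [/allP ha|].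
  have h : (sumn c <= l * q0)%N.
    by rewrite -szc; apply: sumn_bound => i lt; apply: ha; rewrite mem_iota add0n -szc.
  have hh := leq_trans h (leq_mul lm (leqnn q0)).
  by move: (leq_trans (leqnSn _) (leq_trans hN hh)); rewrite /N ltnn.
rewrite -has_predC => /hasP [i]; rewrite mem_iota add0n => /andP[_ lt] /=; rewrite -leqNgt => hi.
by rewrite (ml_zero_at (hlin l2 lm) (i := Ordinal lt)) ?scaler0 //= hS.
Qed.

Definition PsiP (x0 : 'I_n) l (w : 'I_n -> {poly K}) (j : 'I_n) : {poly K} :=
  \sum_(c <- tup (fun _ => index_enum 'I_n) l)
    (\prod_(0 <= i < l) w (nth x0 c i)) * (Psi l (fun i => delta_mx 0 (nth x0 c i)) 0 j)%:P.

Lemma PsiP_eval x0 l w j x : (2 <= l)%N -> (l <= m)%N ->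
  (PsiP x0 l w j).[x] = Psi l (fun _ => \row_k (w k).[x]) 0 j.
Proof.
move=> l2 lm; rewrite /PsiP horner_sum.
have -> : (fun _ : 'I_l => \row_k (w k).[x]) = (fun i : 'I_l =>
   \sum_(k <- index_enum 'I_n) (\row_k (w k).[x]) 0 k *: delta_mx 0 k).
  by apply: functional_extensionality => i; rewrite {1}(row_sum_delta (\row_k (w k).[x])).
rewrite (ml_expand (hlin l2 lm) x0 (fun _ => index_enum 'I_n)
   (fun _ k => (\row_k (w k).[x]) 0 k) (fun _ k => delta_mx 0 k)) summxE.
apply: eq_bigr => c _; rewrite hornerM hornerC horner_prod !mxE; congr (_ * _).
by apply: eq_bigr => i _; rewrite mxE.
Qed.


Lemma bwd_TF x : Tinv (yag_map m Psi x) = x.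
Proof.
have hH : is_polymap (fun z => Tinv (yag_map m Psi z)).
  by apply: pm_Tl => //; apply: pm_yag.
case: hH => P HP.
case: (posnP n) => [n0|n_gt0].
  by apply/rowP => j; have := ltn_ord j; rewrite {2}n0.
set x0 := Ordinal n_gt0.
set e := fun j => evp (P j) (fun i => x 0 i *: 'X) - x 0 j *: 'X.
have He j z : (evp (P j) (fun i => x 0 i *: 'X)).[z] = Tinv (yag_map m Psi (z *: x)) 0 j.
  by rewrite evp_eval HP; apply: meval_eq => i; rewrite hornerZ hornerX !mxE mulrC.
have Ez z : Tinv (yag_map m Psi (z *: x)) = z *: x + \row_k (e k).[z].
  apply/rowP => k; rewrite !mxE /e hornerD hornerN hornerZ hornerX He.
  by rewrite mulrC addrC subrK.
have key z : \row_k (e k).[z] = \sum_(l <- lrange m)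
    (Psi l (fun _ => z *: x + \row_k (e k).[z]) - Psi l (fun _ => z *: x)).
  have h1 := bwd_FT (yag_map m Psi (z *: x)); rewrite /Tinv in h1.
  rewrite -/(Tinv _) Ez /yag_map in h1.
  by rewrite sumrB; apply: zmod_solve h1.
have Ipoly j : e j = \sum_(l <- lrange m) (PsiP x0 l (fun k => x 0 k *: 'X + e k) j
    - PsiP x0 l (fun k => x 0 k *: 'X) j).
  apply: (poly_ext hK) => z; rewrite horner_sum.
  have := congr1 (fun M : 'rV[K]_n => M 0 j) (key z); rewrite mxE summxE => ->.
  rewrite big_seq [RHS]big_seq; apply: eq_bigr => l /lrangeP [l2 lm].
  rewrite hornerD hornerN !PsiP_eval // !mxE; congr (Psi l _ 0 j - Psi l _ 0 j).
    apply: functional_extensionality => i; apply/rowP => k.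
    by rewrite !mxE [in RHS]hornerD [in RHS]hornerZ [in RHS]hornerX mulrC.
  apply: functional_extensionality => i; apply/rowP => k.
  by rewrite !mxE [in RHS]hornerZ [in RHS]hornerX mulrC.
have Hk k j : 'X^(k.+1) %| e j.
  elim: k j => [|k IH] j.
    rewrite expr1 (_ : 'X = 'X - 0%:P); last by rewrite polyC0 subr0.
    rewrite dvdp_XsubCl /root /e hornerD hornerN hornerZ hornerX mulr0 subr0 He scale0r.
    rewrite yag0 /Tinv /Tl summxE big1 // => q _; rewrite S_zero scaler0 mxE.
    done.
  rewrite (Ipoly j) big_seq; apply: dvdp_sumP => l /lrangeP [l2 _].
  rewrite /PsiP -sumrB; apply: dvdp_sumP => c _; rewrite -mulrBl; apply: dvdp_mulr.
  case: l l2 => [|[|l']] // _.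
  apply: dvdp_trans (prod_diff (k := k.+1)
    (a := fun i => x 0 (nth x0 c i) *: 'X + e (nth x0 c i))
    (b := fun i => x 0 (nth x0 c i) *: 'X) l'.+1 _ _ _).
  - by apply: dvdp_exp2l; rewrite addnS ltnS leq_addr.
  - by [].
  - by move=> i; rewrite -mul_polyC; apply: dvdp_mull; exact: dvdpp.
  - by move=> i /=; rewrite addrAC subrr add0r; exact: IH.
have e0 j : e j = 0.
  by apply: dvdXn_eq0 => -[|k]; [rewrite expr0 dvd1p | exact: Hk].
move: (Ez 1); rewrite scale1r => ->.
rewrite (_ : \row_k (e k).[1] = 0) ?addr0 //; apply/rowP => k.
by rewrite !mxE e0 horner0.
Qed.

End Bwd.


Lemma uniq_NoDup (T : eqType) (s : seq T) : uniq s -> List.NoDup s.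
Proof.
elim: s => [|x s IH] /=; first by constructor.
case/andP => xs us; constructor; last exact: IH.
by move/InP; apply/negP.
Qed.

Unset Implicit Arguments.
Unset Strict Implicit.

Theorem mainTheorem1 (K : fieldType) (hK : [pchar K] =i pred0) (n m : nat)
    (hm : (2 <= m)%N)
    (Psi : forall l : nat, ('I_l -> 'rV[K]_n) -> 'rV[K]_n)
    (hlin : forall l : nat, (2 <= l)%N -> (l <= m)%N -> multilinear (Psi l))
    (hsym : forall l : nat, (2 <= l)%N -> (l <= m)%N -> symmetric_map (Psi l)) :
  is_polyaut (yag_map m Psi) <-> exists q0 : nat, yagzhev_of_order m Psi q0.
Proof.
split.
  case=> _ [G [[P HP] [hGF _]]].
  exists (maxn (\big[maxn/0%N]_(j < n) msize (P j)) 1) => q hq a.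
  exists (enumF m q q); split; first exact/uniq_NoDup/enumF_uniq.
  split.
    move=> t; split => [/InP /enumF_wf //|[w s]]; apply/InP.
    by apply: enumF_complete => //.
  rewrite -/(Ssum m Psi a q); apply: (fwd_core hK hlin HP hGF).
    by apply: leq_trans hq; rewrite leq_maxr.
  move=> j; apply: leq_trans hq; apply: leq_trans (leq_maxl _ _).
  by rewrite (bigD1 j) //= leq_maxl.
case=> q0 hq.
have hS : forall a k, (q0 <= k)%N -> Ssum m Psi a k = 0.
  move=> a k hk; have [s [nd [Hs Hsum]]] := hq k hk a.
  by rewrite -(S_any Psi a nd Hs).
split; first exact: pm_yag.
exists (Tinv m Psi q0); split.
  have h := @pm_Tl K n m Psi hlin (fun x => x) ((m * q0).+1) 1 (@pm_id K n).
  exact: h.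
split.
  move=> x; exact: (bwd_TF hK hlin hS).
move=> y; exact: (bwd_FT hlin hS).
Qed.
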